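(* Let $\gamma\in\mathbb{R}$ and $\epsilon_{\text{abs}}>0$, and let $\hat g_{-,\gamma}\in\arg\min_{f\in\mathcal{F}}\hat h_{-,\gamma}(f)$. If $\hat h_{-,\gamma}(\hat g_{-,\gamma})\ge0$, then $$\frac{\hat h_{-,\gamma}(\hat g_{-,\gamma})}{\epsilon_{\text{abs}}}-\gamma\le\widehat{MR}(f)$$ for all $f\in\mathcal{F}$ with $\hat e_{\text{orig}}(f)\le\epsilon_{\text{abs}}$; moreover $-\gamma\le\widehat{MR}(f)$ for all $f\in\mathcal{F}$. Additionally, if $\hat h_{-,\gamma}(\hat g_{-,\gamma})\ge0$ and $\hat e_{\text{orig}}(\hat g_{-,\gamma})\le\epsilon_{\text{abs}}$ with at least one of these two inequalities holding with equality, then the displayed inequality holds with equality for $f=\hat g_{-,\gamma}$.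
   Context: Setting: $\mathcal{F}$ a set of prediction models, $L\ge0$ a loss, and a fixed observed sample $(\mathbf{y}_{[i]},\mathbf{X}_{1[i]},\mathbf{X}_{2[i]})$, $i=1,\dots,n$, $n\ge2$. $\hat e_{\text{orig}}(f)=\frac1n\sum_iL\{f,(\mathbf{y}_{[i]},\mathbf{X}_{1[i]},\mathbf{X}_{2[i]})\}$; $\hat e_{\text{switch}}(f)=\frac1{n(n-1)}\sum_i\sum_{j\ne i}L\{f,(\mathbf{y}_{[j]},\mathbf{X}_{1[i]},\mathbf{X}_{2[j]})\}$; $\widehat{MR}(f)=\hat e_{\text{switch}}(f)/\hat e_{\text{orig}}(f)$. For $\gamma\in\mathbb{R}$, $\hat h_{-,\gamma}(f):=\gamma\hat e_{\text{orig}}(f)+\hat e_{\text{switch}}(f)$. Standing assumptions: $\min_{f\in\mathcal{F}}\hat e_{\text{orig}}(f)>0$ and minimizers of $\hat h_{-,\gamma}$ over $\mathcal{F}$ exist. *)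

(* Defs.v *)
From mathcomp Require Import all_boot all_order all_algebra.
Set Implicit Arguments. Unset Strict Implicit. Unset Printing Implicit Defensive.
Import Order.TTheory GRing.Theory Num.Theory.
Local Open Scope ring_scope.

Section MR.
Variables (R : realFieldType) (M Y X1 X2 : Type).
Variable L : M -> Y -> X1 -> X2 -> R.
Variables (n : nat) (y : 'I_n -> Y) (x1 : 'I_n -> X1) (x2 : 'I_n -> X2).

Definition e_orig (f : M) : R :=
  n%:R^-1 * \sum_(i < n) L f (y i) (x1 i) (x2 i).

Definition e_switch (f : M) : R :=
  (n%:R * (n%:R - 1))^-1 *
  \sum_(i < n) \sum_(j < n | j != i) L f (y j) (x1 i) (x2 j).

Definition MR_hat (f : M) : R := e_switch f / e_orig f.

Definition h_minus (gamma : R) (f : M) : R := gamma * e_orig f + e_switch f.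
End MR.

(* Main.v *)
Require Import Defs.
From mathcomp Require Import all_boot all_order all_algebra.
Import Order.TTheory GRing.Theory Num.Theory.
From mathcomp Require Import ring lra.
Local Open Scope ring_scope.

Theorem lemma14 (R : realFieldType) (M Y X1 X2 : Type)
  (F : M -> Prop) (L : M -> Y -> X1 -> X2 -> R)
  (n : nat) (y : 'I_n -> Y) (x1 : 'I_n -> X1) (x2 : 'I_n -> X2)
  (gamma eps_abs : R) (g : M) :
  (2 <= n)%N ->
  (forall f a b c, 0 <= L f a b c) ->
  (* standing assumption: min over F of e_orig exists and is positive *)
  (exists f0, F f0 /\ (forall f, F f -> e_orig L y x1 x2 f0 <= e_orig L y x1 x2 f)
              /\ 0 < e_orig L y x1 x2 f0) ->
  0 < eps_abs ->
  (* g is a minimizer of h_{-,gamma} over F *)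
  F g -> (forall f, F f -> h_minus L y x1 x2 gamma g <= h_minus L y x1 x2 gamma f) ->
  (0 <= h_minus L y x1 x2 gamma g ->
     (forall f, F f -> e_orig L y x1 x2 f <= eps_abs ->
        h_minus L y x1 x2 gamma g / eps_abs - gamma <= MR_hat L y x1 x2 f)
     /\ (forall f, F f -> - gamma <= MR_hat L y x1 x2 f)) /\
  (0 <= h_minus L y x1 x2 gamma g -> e_orig L y x1 x2 g <= eps_abs ->
     (h_minus L y x1 x2 gamma g = 0 \/ e_orig L y x1 x2 g = eps_abs) ->
     h_minus L y x1 x2 gamma g / eps_abs - gamma = MR_hat L y x1 x2 g).
Proof.
move=> _ _ [f0 [Ff0 [f0min f0pos]]] epos Fg gmin.
have eopos : forall f, F f -> 0 < e_orig L y x1 x2 f.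
  by move=> f Ff; apply: lt_le_trans f0pos (f0min f Ff).
have key : forall f, F f -> MR_hat L y x1 x2 f = h_minus L y x1 x2 gamma f / e_orig L y x1 x2 f - gamma.
  move=> f Ff; rewrite /MR_hat /h_minus.
  have := eopos f Ff; set a := e_orig _ _ _ _ _; set b := e_switch _ _ _ _ _ => ap.
  by field; rewrite gt_eqF.
split.
  move=> h0; split.
    move=> f Ff le; rewrite key // lerD2r.
    apply: le_trans (_ : h_minus L y x1 x2 gamma g / e_orig L y x1 x2 f <= _).
      by apply: ler_wpM2l => //; rewrite lef_pV2 ?posrE ?eopos.
    by apply: ler_wpM2r; [rewrite invr_ge0 ltW ?eopos | apply: gmin].
  move=> f Ff; rewrite key // -{1}(add0r (- gamma)) lerD2r.
  by apply: divr_ge0; [apply: le_trans h0 (gmin f Ff) | apply: ltW; apply: eopos].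
move=> _ _ [h0|e0]; rewrite key //.
  by rewrite h0 !mul0r.
by rewrite e0.
Qed.
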